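(* Let $S$ be a conical category and $a,b\in S$. (1) If $S$ is left cancellative and $\mathrm{s}(a)=\mathrm{s}(b)$, then $\varepsilon_S(a)$ and $\varepsilon_S(b)$ have a left gcd in $\mathrm{U_{mon}}(S)$ iff $a$ and $b$ have a left gcd $a\wedge b$ in $S$, and in that case $\varepsilon_S(a\wedge b)$ is the left gcd of $\varepsilon_S(a),\varepsilon_S(b)$. (2) If $S$ is right cancellative and $\mathrm{t}(a)=\mathrm{t}(b)$, then $\varepsilon_S(a)$ and $\varepsilon_S(b)$ have a right gcd in $\mathrm{U_{mon}}(S)$ iff $a$ and $b$ have a right gcd $a\mathbin{\widetilde\wedge} b$ in $S$, and in that case $\varepsilon_S(a\mathbin{\widetilde\wedge} b)$ is the right gcd of $\varepsilon_S(a),\varepsilon_S(b)$.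
   Context: Categories are arrow-only: a set $S$ with partial associative multiplication, identities $\mathrm{Id}\,S$, source/target identities $\mathrm{s}(x),\mathrm{t}(x)$. $S$ is conical if $xy\in\mathrm{Id}\,S$ implies $x\in\mathrm{Id}\,S$. $\mathrm{U_{mon}}(S)$ is the monoid presented by generators $\varepsilon_S(x)$ ($x\in S$) and relations $\varepsilon_S(e)=1$ ($e\in\mathrm{Id}\,S$), $\varepsilon_S(x)\varepsilon_S(y)=\varepsilon_S(xy)$ whenever $xy$ is defined. In a category or monoid $C$, $a\leqslant_C b$ iff $b=ax$ for some $x$, and $a\mathbin{\widetilde\leqslant}_C b$ iff $b=xa$ for some $x$; a left gcd (resp. right gcd) of a pair is a greatest lower bound with respect to $\leqslant$ (resp. $\mathbin{\widetilde\leqslant}$). *)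

(* Defs.v *)
From Stdlib Require Import List.
Import ListNotations.
Set Implicit Arguments.

(* Convention: the product x*y is defined iff t(x) = s(y); [comp] is total,
   its values outside the domain of definition are irrelevant junk. *)
Record category := Category {
  carrier :> Type;
  src : carrier -> carrier;
  tgt : carrier -> carrier;
  comp : carrier -> carrier -> carrier;
  src_src : forall x, src (src x) = src x;
  tgt_src : forall x, tgt (src x) = src x;
  src_tgt : forall x, src (tgt x) = tgt x;
  tgt_tgt : forall x, tgt (tgt x) = tgt x;
  src_comp : forall x y, tgt x = src y -> src (comp x y) = src x;
  tgt_comp : forall x y, tgt x = src y -> tgt (comp x y) = tgt y;
  comp_src : forall x, comp (src x) x = x;
  comp_tgt : forall x, comp x (tgt x) = x;
  compA : forall x y z, tgt x = src y -> tgt y = src z ->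
            comp (comp x y) z = comp x (comp y z)
}.

Arguments src {c} _.
Arguments tgt {c} _.
Arguments comp {c} _ _.

Section Cat.
Variable S : category.

Definition defined (x y : S) : Prop := tgt x = src y.

Definition is_id (e : S) : Prop := src e = e.

Definition conical : Prop :=
  forall x y : S, defined x y -> is_id (comp x y) -> is_id x.

Definition left_cancellative : Prop :=
  forall x y z : S, defined x y -> defined x z -> comp x y = comp x z -> y = z.

Definition right_cancellative : Prop :=
  forall x y z : S, defined y x -> defined z x -> comp y x = comp z x -> y = z.

Definition leS (a b : S) : Prop := exists x, defined a x /\ b = comp a x.
Definition tleS (a b : S) : Prop := exists x, defined x a /\ b = comp x a.

(* U_mon(S): the free monoid on S (words = lists, product = concatenation)
   modulo the congruence generated by eps(e) = 1 (e identity) and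
   eps(x) eps(y) = eps(xy) when xy is defined. *)
Inductive umon_eq : list S -> list S -> Prop :=
  | ue_id : forall e, is_id e -> umon_eq [e] []
  | ue_mul : forall x y, defined x y -> umon_eq [x; y] [comp x y]
  | ue_refl : forall u, umon_eq u u
  | ue_sym : forall u v, umon_eq u v -> umon_eq v u
  | ue_trans : forall u v w, umon_eq u v -> umon_eq v w -> umon_eq u w
  | ue_ctx : forall p q u v, umon_eq u v -> umon_eq (p ++ u ++ q) (p ++ v ++ q).

Definition eps (x : S) : list S := [x].

Definition leU (u v : list S) : Prop := exists w, umon_eq v (u ++ w).
Definition tleU (u v : list S) : Prop := exists w, umon_eq v (w ++ u).
End Cat.
Arguments umon_eq {S} _ _.
Arguments eps {S} _.
Arguments leU {S} _ _.
Arguments tleU {S} _ _.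
Arguments leS {S} _ _.
Arguments tleS {S} _ _.

Definition is_glb (T : Type) (le : T -> T -> Prop) (x y g : T) : Prop :=
  le g x /\ le g y /\ (forall h, le h x -> le h y -> le h g).

(* Main.v *)
Require Import Defs.
From Stdlib Require Import List ClassicalEpsilon.
Import ListNotations.

Lemma emi_true (P : Prop) (p : P) (A : Type) (u v : A) :
  (if excluded_middle_informative P then u else v) = u.
Proof. destruct (excluded_middle_informative P); [reflexivity|contradiction]. Qed.
Lemma emi_false (P : Prop) (p : ~P) (A : Type) (u v : A) :
  (if excluded_middle_informative P then u else v) = v.
Proof. destruct (excluded_middle_informative P); [contradiction|reflexivity]. Qed.
Arguments emi_true {P} p {A} u v. Arguments emi_false {P} p {A} u v.

Lemma id_tgt (S : category) (e : S) : is_id S e -> tgt e = e.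
Proof. unfold is_id; intro H. rewrite <- H at 1. rewrite tgt_src. exact H. Qed.

Lemma comp_id_l (S : category) (e y : S) : is_id S e -> defined S e y -> comp e y = y.
Proof. intros H D. unfold defined in D. rewrite id_tgt in D by exact H. subst e. apply comp_src. Qed.

Lemma comp_id_r (S : category) (x e : S) : is_id S e -> defined S x e -> comp x e = x.
Proof. intros H D. unfold defined, is_id in *. rewrite H in D. rewrite <- D. apply comp_tgt. Qed.

Lemma con_nonid {S : category} (Hc : conical S) {x y : S} :
  defined S x y -> ~ is_id S x -> ~ is_id S (comp x y).
Proof. intros D N I. apply N. exact (Hc x y D I). Qed.

Definition push (S : category) (x : S) (W : list S) : list S :=
  if excluded_middle_informative (is_id S x) then W else
  match W with
  | [] => [x]
  | z :: W' => if excluded_middle_informative (defined S x z)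
               then comp x z :: W' else x :: z :: W'
  end.

Definition pushs (S : category) (u W : list S) := fold_right (push S) W u.
Definition nf (S : category) (u : list S) := pushs S u [].

Fixpoint red (S : category) (w : list S) : Prop :=
  match w with
  | [] => True
  | x :: t => ~ is_id S x /\
      match t with [] => True | y :: _ => ~ defined S x y end /\ red S t
  end.

Lemma push_id (S : category) x W : is_id S x -> push S x W = W.
Proof. intro H. unfold push. now rewrite (emi_true H). Qed.
Arguments push_id S x {W} _.

Lemma push_nid (S : category) x W : ~ is_id S x -> push S x W =
  match W with
  | [] => [x]
  | z :: W' => if excluded_middle_informative (defined S x z)
               then comp x z :: W' else x :: z :: W'
  end.
Proof. intro H. unfold push. now rewrite (emi_false H). Qed.
Arguments push_nid S x {W} _.

Lemma push_red {S : category} (Hc : conical S) x W : red S W -> red S (push S x W).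
Proof.
  intro R. destruct (excluded_middle_informative (is_id S x)) as [I|I].
  - now rewrite push_id.
  - rewrite push_nid by exact I. destruct W as [|z W'].
    + simpl. tauto.
    + destruct (excluded_middle_informative (defined S x z)) as [D|D].
      * simpl in R |- *. destruct R as [R1 [R2 R3]]. split; [now apply con_nonid|].
        split; [|exact R3]. destruct W' as [|y W'']; [exact Logic.I|].
        unfold defined in *. rewrite tgt_comp by exact D. exact R2.
      * simpl in R |- *. tauto.
Qed.

Lemma pushs_red {S : category} (Hc : conical S) u W : red S W -> red S (pushs S u W).
Proof. intro R. induction u; simpl; auto. apply push_red; auto. Qed.

Lemma nf_red {S : category} (Hc : conical S) u : red S (nf S u).
Proof. apply pushs_red; simpl; auto. Qed.

Lemma push_comp {S : category} (Hc : conical S) x y W : red S W -> defined S x y ->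
  push S (comp x y) W = push S x (push S y W).
Proof.
  intros R D.
  destruct (excluded_middle_informative (is_id S x)) as [Ix|Ix].
  { rewrite comp_id_l by assumption. now rewrite (push_id _ x). }
  destruct (excluded_middle_informative (is_id S y)) as [Iy|Iy].
  { rewrite comp_id_r by assumption. now rewrite (push_id _ y). }
  assert (Ixy := con_nonid Hc D Ix).
  rewrite (push_nid _ _ Ixy), (push_nid _ _ Iy).
  destruct W as [|z W'].
  - rewrite (push_nid _ _ Ix). now rewrite (emi_true D).
  - destruct (excluded_middle_informative (defined S y z)) as [D2|D2].
    + assert (D3 : defined S (comp x y) z).
      { unfold defined in *. rewrite tgt_comp by exact D. exact D2. }
      assert (D4 : defined S x (comp y z)).
      { unfold defined in *. rewrite src_comp by exact D2. exact D. }
      rewrite (emi_true D3), (push_nid _ _ Ix), (emi_true D4).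
      f_equal. apply compA; assumption.
    + assert (D3 : ~ defined S (comp x y) z).
      { unfold defined in *. rewrite tgt_comp by exact D. exact D2. }
      rewrite (emi_false D3), (push_nid _ _ Ix), (emi_true D). reflexivity.
Qed.

Lemma pushs_push {S : category} (Hc : conical S) x v w : red S w ->
  pushs S (push S x v) w = push S x (pushs S v w).
Proof.
  intro R.
  destruct (excluded_middle_informative (is_id S x)) as [Ix|Ix].
  { now rewrite !push_id. }
  rewrite (push_nid _ _ Ix). destruct v as [|y v']; [reflexivity|].
  destruct (excluded_middle_informative (defined S x y)) as [D|D]; [|reflexivity].
  simpl. apply push_comp; auto. apply pushs_red; auto.
Qed.

Lemma pushs_nf {S : category} (Hc : conical S) u w : red S w ->
  pushs S u w = pushs S (nf S u) w.
Proof.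
  intro R. induction u as [|x u IH]; [reflexivity|].
  simpl. rewrite IH. unfold nf. simpl. rewrite pushs_push; auto.

Qed.

Lemma nf_app (S : category) u v : nf S (u ++ v) = pushs S u (nf S v).
Proof. unfold nf, pushs. apply fold_right_app. Qed.

Lemma sound {S : category} (Hc : conical S) u v : umon_eq u v -> nf S u = nf S v.
Proof.
  induction 1.
  - unfold nf; simpl. now rewrite push_id.
  - unfold nf; simpl. symmetry. apply push_comp; simpl; auto.
  - reflexivity.
  - auto.
  - congruence.
  - rewrite !nf_app, !(pushs_nf Hc u) by (apply nf_red; auto).
    rewrite IHumon_eq. now rewrite <- !(pushs_nf Hc v) by (apply nf_red; auto).
Qed.

Lemma push_eq (S : category) x W : umon_eq (x :: W) (push S x W).
Proof.
  destruct (excluded_middle_informative (is_id S x)) as [Ix|Ix].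
  - rewrite push_id by exact Ix.
    exact (ue_ctx [] W (ue_id Ix)).
  - rewrite push_nid by exact Ix. destruct W as [|z W']; [apply ue_refl|].
    destruct (excluded_middle_informative (defined S x z)) as [D|D]; [|apply ue_refl].
    exact (ue_ctx [] W' (ue_mul D)).
Qed.

Lemma complete (S : category) u : umon_eq u (nf S u).
Proof.
  induction u as [|x u IH]; [apply ue_refl|].
  apply ue_trans with (x :: nf S u).
  - pose proof (ue_ctx [x] [] IH) as H. simpl in H. rewrite !app_nil_r in H. exact H.
  - apply push_eq.
Qed.

Lemma eq_iff {S : category} (Hc : conical S) u v : umon_eq u v <-> nf S u = nf S v.
Proof.
  split; [apply sound; auto|].
  intro E. apply ue_trans with (nf S u); [apply complete|].
  rewrite E. apply ue_sym, complete.
Qed.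

Lemma leU_iff {S : category} (Hc : conical S) u v :
  leU u v <-> exists w, nf S v = pushs S (nf S u) (nf S w).
Proof.
  unfold leU. split; intros [w H]; exists w.
  - apply (eq_iff Hc) in H. rewrite H, nf_app. apply pushs_nf; auto. apply nf_red; auto.
  - apply (eq_iff Hc). rewrite H, nf_app. symmetry. apply pushs_nf; auto. apply nf_red; auto.
Qed.

Lemma leS_refl (S : category) (a : S) : leS a a.
Proof. exists (tgt a). split; [unfold defined; now rewrite src_tgt | now rewrite comp_tgt]. Qed.

Lemma leS_src (S : category) (a : S) : leS (src a) a.
Proof. exists a. split; [unfold defined; now rewrite tgt_src | now rewrite comp_src]. Qed.

Lemma leS_id_src (S : category) (h a : S) : is_id S h -> leS h a -> h = src a.
Proof.
  intros I [x [D E]]. subst a. rewrite comp_id_l by assumption.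
  unfold defined in D. rewrite id_tgt in D by assumption. exact D.
Qed.

Lemma leS_src_eq (S : category) (c a : S) : leS c a -> src c = src a.
Proof. intros [x [D E]]. subst a. now rewrite src_comp. Qed.

Lemma nf_single (S : category) (a : S) : nf S [a] = push S a [].
Proof. reflexivity. Qed.

Lemma push_head (S : category) x V : ~ is_id S x ->
  exists h T, push S x V = h :: T /\ src h = src x.
Proof.
  intro I. rewrite push_nid by exact I. destruct V as [|z V'].
  - eauto.
  - destruct (excluded_middle_informative (defined S x z)) as [D|D]; eauto.
    exists (comp x z), V'. split; auto. now rewrite src_comp.
Qed.

Lemma L1 {S : category} (Hc : conical S) (u : list S) (a : S) :
  leU u [a] <-> (nf S u = [] \/ exists c, nf S u = [c] /\ leS c a).
Proof.
  split.
  - intro H. apply (leU_iff Hc) in H. destruct H as [w H].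
    rewrite nf_single in H.
    pose proof (nf_red Hc u) as RU. pose proof (nf_red Hc w) as RW.
    destruct (nf S u) as [|x [|y U']] eqn:EU; [now left| |].
    + simpl in H. destruct RU as [Ix _]. right. exists x. split; [reflexivity|].
      destruct (excluded_middle_informative (is_id S a)) as [Ia|Ia].
      { rewrite push_id in H by exact Ia. destruct (push_head _ _ (nf S w) Ix) as [h [T [E _]]].
        congruence. }
      rewrite push_nid in H by exact Ia. rewrite push_nid in H by exact Ix.
      destruct (nf S w) as [|z [|z' W'']].
      * inversion H. apply leS_refl.
      * destruct (excluded_middle_informative (defined S x z)) as [D|D]; [|discriminate].
        inversion H. exists z. auto.
      * destruct (excluded_middle_informative (defined S x z)) as [D|D]; discriminate.
    + simpl in H. simpl in RU. destruct RU as [Ix [Dxy [Iy _]]].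
      destruct (push_head _ _ (pushs S U' (nf S w)) Iy) as [h [T [E Eh]]].
      rewrite E in H. rewrite (push_nid S x) in H by exact Ix.
      assert (Dxh : ~ defined S x h) by (unfold defined in *; congruence).
      rewrite (emi_false Dxh) in H.
      destruct (excluded_middle_informative (is_id S a)) as [Ia|Ia].
      * rewrite push_id in H by exact Ia. discriminate.
      * rewrite push_nid in H by exact Ia. discriminate.
  - intros [H|[c [H [x [D E]]]]]; apply (leU_iff Hc).
    + exists [a]. rewrite H. reflexivity.
    + exists [x]. rewrite H, E. simpl. apply push_comp; simpl; auto.
Qed.

Lemma leU_r {S : category} (Hc : conical S) u v v' : nf S v = nf S v' -> leU u v -> leU u v'.
Proof. intros E H. apply (leU_iff Hc) in H. apply (leU_iff Hc). now rewrite <- E. Qed.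

Lemma nf_nid (S : category) (h : S) : ~ is_id S h -> nf S [h] = [h].
Proof. intro I. rewrite nf_single. now rewrite push_nid. Qed.

Lemma mainL {S : category} (Hc : conical S) (a b : S) : src a = src b ->
     ((exists g, is_glb (@leU S) (eps a) (eps b) g) <->
      (exists d, is_glb (@leS S) a b d)) /\
     (forall d, is_glb (@leS S) a b d ->
        is_glb (@leU S) (eps a) (eps b) (eps d)).
Proof.
  intro Hs. unfold eps.
  assert (ALL : forall d, is_glb (@leS S) a b d -> is_glb (@leU S) [a] [b] [d]).
  { intros d [Da [Db Dm]].
    assert (Hd : forall e, leS d e -> leU [d] [e]).
    { intros e De. apply (L1 Hc). rewrite nf_single.
      destruct (excluded_middle_informative (is_id S d)) as [I|I].
      - left. now rewrite push_id.
      - right. exists d. split; auto. now rewrite push_nid. }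
    split; [auto|split; [auto|]].
    intros h Ha Hb. apply (L1 Hc) in Ha. apply (L1 Hc) in Hb. apply (L1 Hc).
    destruct Ha as [Ha|[c [Ec Hca]]]; [now left|].
    destruct Hb as [Hb|[c' [Ec' Hcb]]]; [congruence|].
    right. exists c. split; auto. apply Dm; auto. rewrite Ec in Ec'. inversion Ec'. now subst. }
  split; [|exact ALL].
  split; [|intros [d Hd]; exists [d]; auto].
  intros [g [Ga [Gb Gm]]].
  assert (Hh : forall h, ~ is_id S h -> leS h a -> leS h b -> leU [h] g).
  { intros h I Ha Hb. apply Gm; apply (L1 Hc); right; exists h; split; auto; apply nf_nid; auto. }
  pose proof (nf_red Hc g) as RG.
  apply (L1 Hc) in Ga. destruct Ga as [Ga|[c [Ec Hca]]].
  - exists (src a). split; [apply leS_src|split; [rewrite Hs; apply leS_src|]].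
    intros h Ha Hb. destruct (excluded_middle_informative (is_id S h)) as [I|I].
    + rewrite (leS_id_src _ _ _ I Ha). apply leS_refl.
    + exfalso. pose proof (Hh h I Ha Hb) as H. apply (leU_iff Hc) in H.
      destruct H as [w H]. rewrite Ga, nf_nid in H by exact I. simpl in H.
      destruct (push_head _ _ (nf S w) I) as [h' [T [E _]]]. congruence.
  - apply (L1 Hc) in Gb. destruct Gb as [Gb|[c' [Ec' Hcb]]]; [congruence|].
    rewrite Ec in Ec'. inversion Ec'. subst c'.
    exists c. split; [auto|split; [auto|]].
    intros h Ha Hb. destruct (excluded_middle_informative (is_id S h)) as [I|I].
    + rewrite (leS_id_src _ _ _ I Ha). rewrite <- (leS_src_eq _ _ _ Hca). apply leS_src.
    + pose proof (Hh h I Ha Hb) as H.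
      assert (Ic : ~ is_id S c) by (rewrite Ec in RG; simpl in RG; tauto).
      apply (leU_r Hc [h] g [c]) in H; [|rewrite Ec; symmetry; apply nf_nid; auto].
      apply (L1 Hc) in H. rewrite nf_nid in H by exact I.
      destruct H as [H|[c'' [E H]]]; [discriminate|]. inversion E. now subst.
Qed.

Definition op (S : category) : category.
Proof.
  refine (@Category (carrier S) (@tgt S) (@src S) (fun x y => comp y x) _ _ _ _ _ _ _ _ _).
  - apply tgt_tgt.
  - apply src_tgt.
  - apply tgt_src.
  - apply src_src.
  - intros x y H. apply tgt_comp. auto.
  - intros x y H. apply src_comp. auto.
  - apply comp_tgt.
  - apply comp_src.
  - intros x y z H1 H2. symmetry. apply compA; auto.
Defined.

Lemma op_conical (S : category) : conical S -> conical (op S).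
Proof.
  intros Hc x y D I. unfold defined, is_id in *; simpl in *.
  assert (Iy : src y = y) by (apply (Hc y x); [unfold defined; auto|]; unfold is_id;
    rewrite <- I at 2; rewrite <- (src_tgt S (comp y x)), I; reflexivity).
  assert (E : comp y x = x) by (apply comp_id_l; [exact Iy| unfold defined; auto]).
  rewrite E in I. exact I.
Qed.

Lemma rev_eq1 (S : category) (u v : list S) : umon_eq u v -> @umon_eq (op S) (rev u) (rev v).
Proof.
  induction 1; simpl.
  - apply (@ue_id (op S)). unfold is_id; simpl. apply id_tgt; auto.
  - apply (@ue_mul (op S) y x). unfold defined in *; simpl; auto.
  - apply ue_refl.
  - now apply ue_sym.
  - eapply ue_trans; eauto.
  - rewrite !rev_app_distr, <- !app_assoc. exact (@ue_ctx (op S) _ _ _ _ IHumon_eq).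
Qed.

Lemma rev_eq2 (S : category) (u v : list S) : @umon_eq (op S) u v -> umon_eq (rev u) (rev v).
Proof.
  induction 1; simpl.
  - apply ue_id. unfold is_id in *; simpl in *. rewrite <- H at 2. rewrite <- H at 1. apply src_tgt.
  - apply (@ue_mul S y x). unfold defined in *; simpl in *; auto.
  - apply ue_refl.
  - now apply ue_sym.
  - eapply ue_trans; eauto.
  - rewrite !rev_app_distr, <- !app_assoc. now apply ue_ctx.
Qed.

Lemma tleU_op (S : category) (u v : list S) : tleU u v <-> @leU (op S) (rev u) (rev v).
Proof.
  split; intros [w H].
  - exists (rev w). apply rev_eq1 in H. now rewrite rev_app_distr in H.
  - exists (rev w). apply rev_eq2 in H. rewrite rev_app_distr, !rev_involutive in H. exact H.
Qed.

Lemma tleS_op (S : category) (a b : S) : tleS a b <-> @leS (op S) a b.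
Proof.
  unfold tleS, leS, defined; simpl. split; intros [x [D E]]; exists x; split; auto.
Qed.

Lemma glb_ext (T : Type) (le1 le2 : T -> T -> Prop) (f : T -> T) :
  (forall x, f (f x) = x) -> (forall x y, le1 x y <-> le2 (f x) (f y)) ->
  forall x y g, is_glb le1 x y g <-> is_glb le2 (f x) (f y) (f g).
Proof.
  intros Inv Hle x y g. unfold is_glb. rewrite !Hle. split.
  - intros [A [B C]]. split; [auto|split; [auto|]]. intros h H1 H2.
    rewrite <- (Inv h) in H1, H2 |- *. rewrite <- Hle in H1, H2 |- *. auto.
  - intros [A [B C]]. split; [auto|split; [auto|]]. intros h H1 H2.
    rewrite Hle in H1, H2 |- *. auto.
Qed.

Lemma mainR {S : category} (Hc : conical S) (a b : S) : tgt a = tgt b ->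
     ((exists g, is_glb (@tleU S) (eps a) (eps b) g) <->
      (exists d, is_glb (@tleS S) a b d)) /\
     (forall d, is_glb (@tleS S) a b d ->
        is_glb (@tleU S) (eps a) (eps b) (eps d)).
Proof.
  intro Ht.
  destruct (mainL (op_conical S Hc) a b Ht) as [M1 M2].
  assert (G1 : forall g, is_glb (@tleU S) (eps a) (eps b) g <->
                  is_glb (@leU (op S)) (eps a) (eps b) (rev g)).
  { intro g. apply (glb_ext _ (@tleU S) (@leU (op S)) (@rev S)).
    - apply rev_involutive.
    - apply tleU_op. }
  assert (G2 : forall d, is_glb (@tleS S) a b d <-> is_glb (@leS (op S)) a b d).
  { intro d. apply (glb_ext _ (@tleS S) (@leS (op S)) (fun x => x)); [reflexivity|apply tleS_op]. }
  split.
  - split.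
    + intros [g Hg]. apply G1 in Hg. destruct (proj1 M1 (ex_intro _ _ Hg)) as [d Hd].
      exists d. now apply G2.
    + intros [d Hd]. apply G2 in Hd. exists (eps d). apply G1. now apply M2.
  - intros d Hd. apply G1. apply M2. now apply G2.
Qed.

Theorem corollary5p7 (S : category) (a b : S) :
  conical S ->
  (left_cancellative S -> src a = src b ->
     ((exists g, is_glb (@leU S) (eps a) (eps b) g) <->
      (exists d, is_glb (@leS S) a b d)) /\
     (forall d, is_glb (@leS S) a b d ->
        is_glb (@leU S) (eps a) (eps b) (eps d))) /\
  (right_cancellative S -> tgt a = tgt b ->
     ((exists g, is_glb (@tleU S) (eps a) (eps b) g) <->
      (exists d, is_glb (@tleS S) a b d)) /\
     (forall d, is_glb (@tleS S) a b d ->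
        is_glb (@tleU S) (eps a) (eps b) (eps d))).
Proof.
  intro Hc. split; intros _ H.
  - exact (mainL Hc a b H).
  - exact (mainR Hc a b H).
Qed.
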